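(* Under the standing setup and Assumptions 1 and 2 below (and the standing restriction on $\mathcal{B}$), there exists a matrix $\nu^*\in\mathbb{R}_+^{m\times m}$ with nonnegative entries such that the access policy $\alpha^*=(\alpha_1^*,\dots,\alpha_m^* )\in\mathcal{A}$ defined for each $i=1,\dots,m$ and each $h_i\in\mathbb{R}_+$ by $$\alpha_i^*(h_i)=\begin{cases}1 & \text{if } \nu^*_{ii}\,q(h_i)\ \ge\ p_i+\sum_{j\neq i}\nu^*_{ji}\,q_{ij},\\ 0 & \text{otherwise},\end{cases}$$ is an optimal solution of the random access design problem (P).
   Context: Standing setup: $m\ge 1$ sensors indexed by $i$. For each $i$, the channel state $h_i$ is a random variable on $\mathbb{R}_+$ with distribution $\phi_i$, and $h_1,\dots,h_m$ are mutually independent. The function $q:\mathbb{R}_+\to[0,1]$ is continuous and strictly increasing. Constants: collision probabilities $q_{ji}\in[0,1]$ for $j\neq i$, transmit powers $p_i>0$, required success rates $c_i\in(0,1]$. An access policy for sensor $i$ is a measurable function $\alpha_i:\mathbb{R}_+\to[0,1]$; $\mathcal{A}_i$ is the set of all such functions and $\mathcal{A}=\mathcal{A}_1\times\cdots\times\mathcal{A}_m$. Problem (P): $$\min_{\alpha\in\mathcal{A}}\ \sum_{i=1}^m p_i\,\mathbb{E}_{h_i}[\alpha_i(h_i)]\quad\text{s.t.}\quad c_i\le \mathbb{E}_{h_i}[\alpha_i(h_i)q(h_i)]\prod_{j\ne i}\big(1-\mathbb{E}_{h_j}[\alpha_j(h_j)]\,q_{ji}\big),\ i=1,\dots,m.$$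 Assumption 1: each $\phi_i$ is non-atomic (continuous distribution function). Assumption 2 (strict feasibility): there exists $\alpha'\in\mathcal{A}$ satisfying all constraints of (P) with strict inequality. Standing restriction: there are constants $0<\beta_{\min}<\beta_{\max}<1$, with $\mathcal{B}=[\beta_{\min},\beta_{\max}]$, such that restricting (P) to policies with $\mathbb{E}_{h_i}[\alpha_i(h_i)q(h_i)]\in\mathcal{B}$ and $\mathbb{E}_{h_j}[\alpha_j(h_j)]q_{ji}\in\mathcal{B}$ for all $i,j$, $j\ne i$, does not change the feasible set of (P). *)

(* Defs.v *)
From HB Require Import structures.
From mathcomp Require Import all_boot all_order all_algebra.
From mathcomp Require Import all_classical all_reals all_analysis.
Set Implicit Arguments. Unset Strict Implicit. Unset Printing Implicit Defensive.
Import Order.TTheory GRing.Theory Num.Theory.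
Local Open Scope classical_set_scope.
Local Open Scope ring_scope.

Section Defs.
Variable R : realType.

Definition Rplus : set R := `[0, +oo[%classic.

Definition expect (phi : probability R R) (f : R -> R) : R :=
  Rintegral phi Rplus f.

Definition is_policy (a : R -> R) : Prop :=
  measurable_fun Rplus a /\ forall h, Rplus h -> 0 <= a h <= 1.

Variables (m : nat) (phi : 'I_m -> probability R R) (q : R -> R)
  (qc : 'I_m -> 'I_m -> R) (p c : 'I_m -> R).

Definition success_rate (alpha : 'I_m -> R -> R) (i : 'I_m) : R :=
  expect (phi i) (fun h => alpha i h * q h) *
  \prod_(j < m | j != i) (1 - expect (phi j) (alpha j) * qc j i).

Definition feasibleP (alpha : 'I_m -> R -> R) : Prop :=
  (forall i, is_policy (alpha i)) /\ forall i, c i <= success_rate alpha i.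

Definition strictly_feasibleP (alpha : 'I_m -> R -> R) : Prop :=
  (forall i, is_policy (alpha i)) /\ forall i, c i < success_rate alpha i.

Definition objectiveP (alpha : 'I_m -> R -> R) : R :=
  \sum_(i < m) p i * expect (phi i) (alpha i).

Definition optimalP (alpha : 'I_m -> R -> R) : Prop :=
  feasibleP alpha /\ forall beta, feasibleP beta -> objectiveP alpha <= objectiveP beta.

Definition threshold_policy (nu : 'M[R]_m) (i : 'I_m) (h : R) : R :=
  if p i + \sum_(j < m | j != i) nu j i * qc i j <= nu i i * q h then 1 else 0.

End Defs.

(* Main.v *)
Require Import Defs.
From HB Require Import structures.
From mathcomp Require Import all_boot all_order all_algebra.
From mathcomp Require Import all_classical all_reals all_analysis.
From mathcomp Require Import measurable_realfun.
From mathcomp Require Import ring lra.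
Import Order.TTheory GRing.Theory Num.Theory numFieldNormedType.Exports.
Local Open Scope classical_set_scope.
Local Open Scope ring_scope.
Set Implicit Arguments. Unset Strict Implicit. Unset Printing Implicit Defensive.

Section Helpers.
Context (R : realType) (P : probability R R).
Local Notation D := (@Rplus R).

Lemma mD : measurable D.
Proof. exact: measurable_itv. Qed.

Lemma integ (f : R -> R) (M : R) : measurable_fun D f ->
  (forall x, D x -> `|f x| <= M) -> P.-integrable D (EFin \o f).
Proof.
move=> mf fM; apply/integrableP; split; first exact/measurable_EFinP.
have M0 : 0 <= M.
  have : D 0 by rewrite /D /Rplus /= in_itv /= lexx.
  by move=> /fM; apply: le_trans.
apply: (@le_lt_trans _ _ (M%:E * P D)%E).
  apply: integral_le_bound => //; first exact: mD.
    exact/measurable_EFinP.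
  by apply: aeW => x Dx; rewrite /= lee_fin fM.
apply: (@le_lt_trans _ _ (M%:E * 1)%E).
  by rewrite lee_wpmul2l ?lee_fin// probability_le1//; exact: mD.
by rewrite mule1 ltry.
Qed.

Variable q : R -> R.
Hypothesis P1 : P D = 1%E.
Hypothesis mq : measurable_fun D q.
Hypothesis q01 : forall h, D h -> 0 <= q h <= 1.

Definition Tf (t : R) (h : R) : R := if t <= q h then 1 else 0.
Definition A (t : R) : set R := D `&` [set h | t <= q h].

Lemma D0 : D 0.
Proof. by rewrite /D /Rplus /= in_itv /= lexx. Qed.

Lemma mA t : measurable (A t).
Proof.
have -> : A t = D `&` q @^-1` `[t, +oo[.
  by apply/seteqP; split => x [Dx]; rewrite /= in_itv /= andbT.
by apply: mq; [exact: mD|exact: measurable_itv].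
Qed.

Lemma mTf t : measurable_fun D (Tf t).
Proof.
have -> : Tf t = \1_(`[t, +oo[ : set R) \o q.
  apply/funext => x; rewrite /Tf /= indicE.
  case: ifP => tq; [rewrite mem_set//|rewrite memNset//]; rewrite /= in_itv /= ?tq//.
apply: measurableT_comp; last exact: mq.
exact: measurable_indic.
Qed.

Definition X t := fine (P (A t)).

Lemma PA_fin t : P (A t) = (X t)%:E.
Proof. by rewrite /X fineK// fin_num_measure//; exact: mA. Qed.

Lemma X_ge0 t : 0 <= X t.
Proof. by rewrite -lee_fin -PA_fin. Qed.

Lemma X_le1 t : X t <= 1.
Proof. by rewrite -lee_fin -PA_fin probability_le1//; exact: mA. Qed.

Lemma X_mono s t : s <= t -> X t <= X s.
Proof.
move=> st; rewrite -lee_fin -!PA_fin le_measure// ?inE; try exact: mA.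
by move=> x [Dx /= tq]; split => //; exact: le_trans tq.
Qed.

Lemma expectTf t : expect P (Tf t) = X t.
Proof.
rewrite /expect /Rintegral /X.
rewrite (_ : (\int[P]_(x in D) (Tf t x)%:E)%E = (\int[P]_(x in D) (\1_(A t) x)%:E)%E).
  by rewrite integral_indic//; [rewrite setIidl//; by move=> x []|exact: mD|exact: mA].
apply: eq_integral => x /set_mem Dx; rewrite indicE /Tf; congr (_%:E).
case: ifP => tq; [rewrite mem_set//|rewrite memNset//].
by move=> [_ /=]; rewrite tq.
Qed.

Lemma Tf01 t h : 0 <= Tf t h <= 1.
Proof. by rewrite /Tf; case: ifP => _; rewrite ?lexx ?ler01. Qed.

Definition Y t := expect P (fun h => Tf t h * q h).

Lemma nb (x M : R) : -M <= x <= M -> `|x| <= M.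
Proof. by move=> /andP[h1 h2]; rewrite ler_norml h1 h2. Qed.

Section NP.
Variable a : R -> R.
Hypothesis ma : measurable_fun D a.
Hypothesis a01 : forall h, D h -> 0 <= a h <= 1.

Lemma NP t : t * (X t - expect P a) <= Y t - expect P (fun h => a h * q h).
Proof.
have key : 0 <= expect P (fun x => (Tf t x - a x) * (q x - t)).
  apply: Rintegral_ge0 => x Dx; move: (a01 Dx) (q01 Dx); rewrite /Tf.
  case: ifP => tq /andP[a0 a1] /andP[q0 q1].
    by apply: mulr_ge0; rewrite subr_ge0.
  by rewrite sub0r mulNr -mulrN opprB mulr_ge0 // subr_ge0 ltW // ltNge tq.
have mq' := mq; have mTf' := mTf t.
rewrite /expect in key.
rewrite (@eq_Rintegral _ _ _ P D (fun x => (Tf t x * q x - a x * q x) - t * (Tf t x - a x))) in key; last first.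
  by move=> x _ /=; ring.
move: key.
have Tq x : D x -> -1 <= Tf t x * q x <= 1.
  move=> Dx; move: (Tf01 t x) (q01 Dx) => /andP[? ?] /andP[? ?]; apply/andP; split; nra.
have aq x : D x -> -1 <= a x * q x <= 1.
  move=> Dx; move: (a01 Dx) (q01 Dx) => /andP[? ?] /andP[? ?]; apply/andP; split; nra.
rewrite RintegralB; first last.
- apply: (integ (M := `|t|)); first by apply: measurable_funM => //; exact: measurable_funB.
  move=> x Dx; rewrite normrM ler_piMr //; apply: nb.
  move: (Tf01 t x) (a01 Dx) => /andP[? ?] /andP[? ?]; apply/andP; split; lra.
- apply: (integ (M := 2)); first by apply: measurable_funB; exact: measurable_funM.
  move=> x Dx; apply: nb; move: (Tq x Dx) (aq x Dx) => /andP[? ?] /andP[? ?].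
  apply/andP; split; lra.
- exact: mD.
rewrite RintegralB; first last.
- apply: (integ (M := 1)); first exact: measurable_funM.
  by move=> x Dx; apply: nb; apply: aq.
- apply: (integ (M := 1)); first exact: measurable_funM.
  by move=> x Dx; apply: nb; apply: Tq.
- exact: mD.
rewrite RintegralZl; first last.
- apply: (integ (M := 1)); first exact: measurable_funB.
  move=> x Dx; apply: nb.
  move: (Tf01 t x) (a01 Dx) => /andP[? ?] /andP[? ?]; apply/andP; split; lra.
- exact: mD.
rewrite RintegralB; first last.
- apply: (integ (M := 1)) => // x Dx; apply: nb; move: (a01 Dx) => /andP[? ?].
  apply/andP; split; lra.
- apply: (integ (M := 1)) => // x Dx; apply: nb; move: (Tf01 t x) => /andP[? ?].
  apply/andP; split; lra.
- exact: mD.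
rewrite -/(expect P (Tf t)) expectTf /Y /expect; lra.
Qed.

End NP.

Lemma invS_le (n k : nat) : (n <= k)%N -> k.+1%:R^-1 <= n.+1%:R^-1 :> R.
Proof. by move=> nk; rewrite lef_pV2 ?posrE// ler_nat ltnS. Qed.

Lemma L1 t e : 0 < e -> exists2 d, 0 < d & X (t - d) <= X t + e.
Proof.
move=> e0; have [//|H] := pselect (exists2 d, 0 < d & X (t - d) <= X t + e).
have H' : forall d, 0 < d -> X t + e < X (t - d).
  move=> d d0; rewrite ltNge; apply/negP => ?; by apply: H; exists d.
pose F n := A (t - n.+1%:R^-1).
have mF n : measurable (F n) by exact: mA.
have FE : \bigcap_n F n = A t.
  apply/seteqP; split => x.
    move=> Fx; have [Dx _] := Fx 0%N (I : setT 0%N); split => //=.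
    rewrite leNgt; apply/negP => /ltr_add_invr [k] qk.
    have [_ /=] := Fx k I; apply/negP; rewrite -ltNge ltrBrDr //.
  move=> [Dx /= tq] n _; split => //=; apply: le_trans tq.
  by rewrite lerBlDr lerDl invr_ge0.
have Fdec : nonincreasing_seq F.
  move=> n k nk; apply/subsetPset => x [Dx /= tq]; split => //=.
  by apply: le_trans tq; rewrite lerB // invS_le.
have Pfin : (P (F 0%N) < +oo)%E by rewrite /F PA_fin ltry.
have mI : measurable (\bigcap_n F n) by rewrite FE; exact: mA.
have cv := nonincreasing_cvg_mu Pfin mF mI Fdec.
rewrite FE in cv.
have : ((X t + e)%:E <= P (A t))%E.
  rewrite -(cvg_lim _ cv) //.
  apply: lime_ge; first exact: cvgP cv.
  apply: nearW => n /=; rewrite /F PA_fin lee_fin; apply: ltW; apply: H'.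
  by rewrite invr_gt0.
by rewrite PA_fin lee_fin; lra.
Qed.

Hypothesis qinc : {in D &, forall x y, x < y -> q x < q y}.
Hypothesis natom : forall x : R, P [set x] = 0%E.

Lemma PA_le_B t : (P (A t) <= P (D `&` [set h | (t < q h)%R]))%E.
Proof.
have mB : measurable (D `&` [set h | t < q h]).
  have -> : D `&` [set h | t < q h] = D `&` q @^-1` `]t, +oo[.
    by apply/seteqP; split => x [Dx]; rewrite /= in_itv /= andbT.
  by apply: mq; [exact: mD|exact: measurable_itv].
have [[h0 [Dh0 qh0]]|nex] := pselect (exists h0, D h0 /\ q h0 = t).
  have h1 : (P (A t) <= P ((D `&` [set h | (t < q h)%R]) `|` [set h0]))%E.
    rewrite le_measure ?inE //; first exact: mA; first exact: measurableU.
    move=> x [Dx /= tq]; move: tq; rewrite le_eqVlt => /predU1P[tq|tq]; last by left.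
    right; apply/eqP; apply/negPn/negP => xh0.
    have [xh|hx|hx] := ltgtP x h0.
    - by move: (qinc (mem_set Dx) (mem_set Dh0) xh); rewrite qh0 tq ltxx.
    - by move: (qinc (mem_set Dh0) (mem_set Dx) hx); rewrite qh0 tq ltxx.
    - by rewrite hx eqxx in xh0.
  apply: le_trans h1 _; apply: le_trans (measureU2 _ mB _) _ => //.
  rewrite -[leRHS]adde0 leeD2l //.
  by have := natom h0; move=> /eqP; rewrite eq_le => /andP[+ _].
rewrite le_measure ?inE //; first exact: mA.
move=> x [Dx /= tq]; split => //=; move: tq; rewrite le_eqVlt => /predU1P[tq|//].
by exfalso; apply: nex; exists x.
Qed.

Lemma L2 t e : 0 < e -> exists2 d, 0 < d & X t <= X (t + d) + e.
Proof.
move=> e0; have [//|H] := pselect (exists2 d, 0 < d & X t <= X (t + d) + e).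
have H' : forall d, 0 < d -> X (t + d) + e < X t.
  move=> d d0; rewrite ltNge; apply/negP => ?; by apply: H; exists d.
pose F n := A (t + n.+1%:R^-1).
have mF n : measurable (F n) by exact: mA.
have FE : \bigcup_n F n = D `&` [set h | t < q h].
  apply/seteqP; split => x.
    move=> [n _ [Dx /= tq]]; split => //=; apply: lt_le_trans tq.
    by rewrite ltrDl invr_gt0.
  move=> [Dx /= tq]; have [k kq] := ltr_add_invr tq.
  by exists k => //; split => //=; apply: ltW.
have Finc : nondecreasing_seq F.
  move=> n k nk; apply/subsetPset => x [Dx /= tq]; split => //=.
  by apply: le_trans tq; rewrite lerD2l invS_le.
have mU : measurable (\bigcup_n F n).
  by apply: bigcup_measurable => n _; exact: mF.
have cv := @nondecreasing_cvg_mu _ _ _ P _ mF mU Finc.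
have : (P (\bigcup_n F n) <= (X t - e)%:E)%E.
  rewrite -(cvg_lim _ cv) //.
  apply: lime_le; first exact: cvgP cv.
  apply: nearW => n /=; rewrite /F PA_fin lee_fin.
  have := H' n.+1%:R^-1; rewrite invr_gt0 ltr0Sn => /(_ isT) h; lra.
rewrite FE; move=> /(le_trans (PA_le_B t)); rewrite PA_fin lee_fin; lra.
Qed.

Lemma X_nonpos t : t <= 0 -> X t = 1.
Proof.
move=> t0; have : P (A t) = 1%E.
  rewrite -P1; congr (P _); apply/seteqP; split => x; first by case.
  move=> Dx; split => //=; apply: le_trans t0 _; by case/andP: (q01 Dx).
by rewrite PA_fin => -[].
Qed.

Lemma Y_big t : 1 < t -> Y t = 0.
Proof.
move=> t1; rewrite /Y /expect (@eq_Rintegral _ _ _ P D (fun=> 0)).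
  by rewrite Rintegral_cst ?mul0r //; exact: mD.
move=> x /set_mem Dx; rewrite /Tf ifF ?mul0r //; apply/negbTE; rewrite -ltNge.
by apply: le_lt_trans t1; case/andP: (q01 Dx).
Qed.

Lemma Y_ge0 t : 0 <= Y t.
Proof.
apply: Rintegral_ge0 => x Dx; apply: mulr_ge0; first by case/andP: (Tf01 t x).
by case/andP: (q01 Dx).
Qed.

Section Pol.
Variable a : R -> R.
Hypothesis ma : measurable_fun D a.
Hypothesis a01 : forall h, D h -> 0 <= a h <= 1.

Lemma ea01 : 0 <= expect P a <= 1.
Proof.
apply/andP; split; first by apply: Rintegral_ge0 => x /a01 /andP[].
have -> : 1 = expect P (fun=> 1).
  by rewrite /expect (@Rintegral_cst _ _ _ P D mD 1) mul1r; apply/esym; exact: (congr1 fine P1).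
rewrite /expect; apply: le_Rintegral; first exact: mD.
- apply: (@integ a 1) => // x Dx.
  by apply: nb; move: (a01 Dx) => /andP[? ?]; apply/andP; split; lra.
- apply: (@integ (fun=> 1) 1) => // x Dx; apply: nb; apply/andP; split; lra.
- by move=> x /a01 /andP[].
Qed.

Lemma eaq_ge0 : 0 <= expect P (fun h => a h * q h).
Proof.
apply: Rintegral_ge0 => x Dx; apply: mulr_ge0; first by case/andP: (a01 Dx).
by case/andP: (q01 Dx).
Qed.

Lemma eaq_le : expect P (fun h => a h * q h) <= expect P a.
Proof.
apply: le_Rintegral; first exact: mD.
- apply: (integ (M := 1)); first exact: measurable_funM.
  move=> x Dx; apply: nb; move: (a01 Dx) (q01 Dx) => /andP[? ?] /andP[? ?].
  apply/andP; split; nra.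
- apply: (integ (M := 1)) => // x Dx; apply: nb; move: (a01 Dx) => /andP[? ?].
  apply/andP; split; lra.
- move=> x Dx; move: (a01 Dx) (q01 Dx) => /andP[? ?] /andP[? ?]; nra.
Qed.

Lemma match_pol : 0 < expect P a -> exists s, 0 <= s /\ X s = expect P a.
Proof.
move=> ea0; set ea := expect P a.
pose G := [set t | 0 <= t /\ ea <= X t].
have G0 : G 0 by split => //; rewrite X_nonpos //; case/andP: ea01.
have Gub : ubound G 1.
  move=> t [t0 et]; rewrite leNgt; apply/negP => t1.
  move: et; rewrite leNgt => /negP; apply.
  apply: le_lt_trans ea0; rewrite /X.
  have : (P (A t) = 0)%E.
    rewrite (_ : A t = set0) ?measure0 //; apply/seteqP; split => // x [Dx /= tq].
    by move: (q01 Dx) => /andP[_ q1]; move: (le_trans tq q1); rewrite leNgt t1.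
  by move=> ->.
have hs : has_sup G by split; [exists 0|exists 1].
set s := sup G.
have s0 : 0 <= s by apply: sup_upper_bound.
exists s; split => //; apply/eqP; rewrite eq_le; apply/andP; split.
  apply/ler_addgt0Pr => e e0; have [d d0 hd] := L2 s e0.
  apply: le_trans hd _; rewrite lerD2r; apply: ltW; rewrite ltNge; apply/negP => eX.
  have : G (s + d) by split => //; apply: addr_ge0 => //; exact: ltW.
  by move/(sup_upper_bound hs); rewrite -/s leNgt ltrDl d0.
apply/ler_addgt0Pr => e e0; have [d d0 hd] := L1 s e0.
have [g [g0 eg] sg] := sup_adherent d0 hs.
apply: le_trans hd; apply: le_trans eg _; apply: X_mono; exact: ltW.
Qed.

End Pol.

End Helpers.
Lemma prod_mono (R : realType) (m : nat) (i : 'I_m) (qc : 'I_m -> 'I_m -> R) (x y : 'I_m -> R) :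
  (forall j, j != i -> 0 <= qc j i <= 1) -> (forall j, 0 <= x j <= y j) -> (forall j, y j <= 1) ->
  \prod_(j < m | j != i) (1 - y j * qc j i) <= \prod_(j < m | j != i) (1 - x j * qc j i).
Proof.
move=> hq hxy hy; apply: ler_prod => j ji.
move: (hq j ji) (hxy j) (hy j) => /andP[? ?] /andP[? ?] ?; apply/andP; split; nra.
Qed.

Lemma prod01 (R : realType) (m : nat) (i : 'I_m) (qc : 'I_m -> 'I_m -> R) (x : 'I_m -> R) :
  (forall j, j != i -> 0 <= qc j i <= 1) -> (forall j, 0 <= x j <= 1) ->
  0 <= \prod_(j < m | j != i) (1 - x j * qc j i) <= 1.
Proof.
move=> hq hx; apply/andP; split.
  apply: prodr_ge0 => j ji; move: (hq j ji) (hx j) => /andP[? ?] /andP[? ?]; nra.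
apply: prodr_ile1 => j ji; move: (hq j ji) (hx j) => /andP[? ?] /andP[? ?].
apply/andP; split; nra.
Qed.

Lemma exists_lb (R : realType) (m : nat) (f : 'I_m -> R) :
  (forall i, 0 < f i) -> exists2 e, 0 < e & forall i, e <= f i.
Proof.
move=> f0; exists (\big[Num.min/1]_(i < m) f i).
  by apply: (big_ind (fun x => 0 < x)) => // x y x0 y0; rewrite lt_min x0 y0.
move=> i; rewrite (bigD1 i) //= ge_min lexx //.
Qed.

Unset Implicit Arguments.
Theorem theorem1 (R : realType) (m : nat) (phi : 'I_m -> probability R R)
  (q : R -> R) (qc : 'I_m -> 'I_m -> R) (p c : 'I_m -> R)
  (beta_min beta_max : R) :
  (0 < m)%N ->
  (forall i, phi i ((@Rplus R)) = 1%E) ->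
  {within (@Rplus R), continuous q} ->
  {in (@Rplus R) &, forall x y, x < y -> q x < q y} ->
  (forall h, (@Rplus R) h -> 0 <= q h <= 1) ->
  (forall i j, j != i -> 0 <= qc j i <= 1) ->
  (forall i, 0 < p i) ->
  (forall i, 0 < c i <= 1) ->
  (forall i (x : R), phi i [set x] = 0%E) ->
  (exists alpha', strictly_feasibleP phi q qc c alpha') ->
  0 < beta_min -> beta_min < beta_max -> beta_max < 1 ->
  (forall alpha, feasibleP phi q qc c alpha ->
     forall i, (beta_min <= expect (phi i) (fun h => alpha i h * q h) <= beta_max) /\
       forall j, j != i -> beta_min <= expect (phi j) (alpha j) * qc j i <= beta_max) ->
  exists nu : 'M[R]_m, (forall i j, 0 <= nu i j) /\
    optimalP phi q qc p c (threshold_policy q qc p nu).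
Proof.
move=> m0 Pplus qcont qinc q01 qc01 p0 c01 natom [a' [pa' sa']] _ _ _ _.
have mq : measurable_fun (@Rplus R) q.
  exact: (subspace_continuous_measurable_fun (@mD R) qcont).
pose Xi i t := X (phi i) q t.
pose Yi i t := Y (phi i) q t.
pose pr (x : 'I_m -> R) i := \prod_(j < m | j != i) (1 - x j * qc j i).
have SR t i : success_rate phi q qc (fun i => Tf q (t i)) i = Yi i (t i) * pr (fun j => Xi j (t j)) i.
  rewrite /success_rate; congr (_ * _); apply: eq_bigr => j _.
  by rewrite expectTf.
have pr01 x i : (forall j, 0 <= x j <= 1) -> 0 <= pr x i <= 1.
  by move=> hx; apply: prod01 => //; move=> j ji; apply: qc01.
have Xi01 i t : 0 <= Xi i t <= 1 by rewrite X_ge0 ?X_le1.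
have matchF : forall a, (forall i, is_policy (a i)) -> (forall i, c i <= success_rate phi q qc a i) ->
    exists s : 'I_m -> R, (forall i, 0 <= s i) /\ (forall i, Xi i (s i) = expect (phi i) (a i)) /\
      (forall i, success_rate phi q qc a i <= Yi i (s i) * pr (fun j => Xi j (s j)) i).
  move=> a pa ca.
  have ea01' i : 0 <= expect (phi i) (a i) <= 1.
    by case: (pa i) => ma a01; apply: ea01.
  have ea_pos i : 0 < expect (phi i) (a i).
    case: (pa i) => ma a01; have := ca i; rewrite /success_rate.
    have := pr01 (fun j => expect (phi j) (a j)) i ea01'; rewrite /pr => /andP[h1 h2].
    have := eaq_ge0 (phi i) q01 a01; have := eaq_le (phi i) mq q01 ma a01.
    move: (c01 i) => /andP[c0 _] h3 h4 h5; nra.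
  have /choice [s hs] : forall i, exists s, 0 <= s /\ Xi i s = expect (phi i) (a i).
    move=> i; case: (pa i) => ma a01.
    exact: (match_pol (Pplus i) mq q01 qinc (natom i) ma a01 (ea_pos i)).
  exists s; split; first by move=> i; case: (hs i).
  split; first by move=> i; case: (hs i).
  move=> i; rewrite /success_rate.
  have -> : pr (fun j => Xi j (s j)) i = \prod_(j < m | j != i) (1 - expect (phi j) (a j) * qc j i).
    by apply: eq_bigr => j _; case: (hs j) => _ ->.
  case: (pa i) => ma a01; have := NP (phi i) mq q01 ma a01 (s i).
  have [_ e] := hs i; rewrite /Xi in e; rewrite e subrr mulr0 subr_ge0 => hY.
  apply: ler_wpM2r => //.
  by case/andP: (pr01 (fun j => expect (phi j) (a j)) i ea01').
pose F := [set t : 'I_m -> R | (forall i, 0 <= t i) /\ forall i, c i <= Yi i (t i) * pr (fun j => Xi j (t j)) i].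
have Fub t : F t -> forall i, t i <= 1.
  move=> [_ Ft] i; rewrite leNgt; apply/negP => t1; move: (Ft i).
  rewrite /Yi Y_big // mul0r; move: (c01 i) => /andP[c0 _]; rewrite leNgt c0.
  done.
have Xmono i s t : s <= t -> Xi i t <= Xi i s by move=> st; exact: X_mono.
have [s' [s'0 [s'X s'Y]]] : exists s : 'I_m -> R, (forall i, 0 <= s i) /\ (forall i, Xi i (s i) = expect (phi i) (a' i)) /\ (forall i, c i < Yi i (s i) * pr (fun j => Xi j (s j)) i).
  have [s [s0 [sX sS]]] := matchF a' pa' (fun i => ltW (sa' i)).
  by exists s; split => //; split => // i; exact: lt_le_trans (sa' i) (sS i).
have [e e0 he] : exists2 e, 0 < e & forall i, e <= Yi i (s' i) * pr (fun j => Xi j (s' j)) i - c i.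
  by apply: exists_lb => i; rewrite subr_gt0.
pose t' i := Num.max (s' i) e.
have Ft' : F t'.
  split; first by move=> i; rewrite le_max s'0.
  move=> i.
  have hX j : Xi j (t' j) <= Xi j (s' j) by apply: Xmono; rewrite le_max lexx.
  have hpr : pr (fun j => Xi j (s' j)) i <= pr (fun j => Xi j (t' j)) i.
    apply: prod_mono => // j; first by move=> ji; apply: qc01.
      by apply/andP; split; [case/andP: (Xi01 j (t' j))|exact: hX].
    by case/andP: (Xi01 j (s' j)).
  have hY : Yi i (s' i) - e <= Yi i (t' i).
    have := NP (phi i) mq q01 (mTf mq (s' i)) (fun h _ => Tf01 q (s' i) h) (t' i).
    rewrite !(expectTf _ mq) -/(Yi i (t' i)) -/(Y (phi i) q (s' i)) -/(Yi i (s' i)).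
    rewrite -/(Xi i (t' i)) -/(Xi i (s' i)).
    have [es|se] := leP e (s' i).
      by rewrite /t' max_l // subrr mulr0 subr_ge0 => h; lra.
    rewrite /t' max_r; last exact: ltW.
    move: (Xi01 i e) (Xi01 i (s' i)) (hX i); rewrite /t' max_r; last exact: ltW.
    move=> /andP[? ?] /andP[? ?] ? h; nra.
  have Yt0 : 0 <= Yi i (t' i) by exact: Y_ge0.
  have /andP[pr0 pr1] : 0 <= pr (fun j => Xi j (s' j)) i <= 1 by apply: pr01.
  move: (he i) => hei.
  have h1 := ler_wpM2l Yt0 hpr.
  have h2 := ler_wpM2r pr0 hY; rewrite mulrBl in h2.
  have h3 : e * pr (fun j => Xi j (s' j)) i <= e by rewrite ler_piMr // ltW.
  lra.
pose S i := [set r | exists2 t, F t & t i = r].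
have hasS i : has_sup (S i).
  split; first by exists (t' i), t'.
  by exists 1 => r [t Ft <-]; exact: Fub.
pose tau i := sup (S i).
have tau_ub t : F t -> forall i, t i <= tau i.
  by move=> Ft i; apply: sup_upper_bound => //; exists t.
have tau_pos i : 0 < tau i.
  by apply: lt_le_trans (tau_ub t' Ft' i); rewrite lt_max e0 orbT.
have tau_le1 i : tau i <= 1.
  apply: ge_sup; first by exists (t' i), t'.
  by move=> r [t Ft <-]; exact: Fub.
have Ftau : F tau.
  split; first by move=> i; exact: ltW.
  move=> i; apply/ler_addgt0Pr => e1 e10.
  have [d d0 hd] := L1 (phi i) mq (tau i) e10.
  have [r [t Ft <-] rlt] := sup_adherent d0 (hasS i).
  have hXt : Xi i (t i) <= Xi i (tau i) + e1.
    apply: le_trans hd; apply: Xmono; exact: ltW.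
  have hpr : pr (fun j => Xi j (t j)) i <= pr (fun j => Xi j (tau j)) i.
    apply: prod_mono => // j; first by move=> ji; apply: qc01.
      apply/andP; split; first by case/andP: (Xi01 j (tau j)).
      by apply: Xmono; exact: tau_ub.
    by case/andP: (Xi01 j (t j)).
  have hY : Yi i (t i) - e1 <= Yi i (tau i).
    have := NP (phi i) mq q01 (mTf mq (t i)) (fun h _ => Tf01 q (t i) h) (tau i).
    rewrite !(expectTf _ mq) -/(Yi i (tau i)) -/(Y (phi i) q (t i)) -/(Yi i (t i)).
    rewrite -/(Xi i (tau i)) -/(Xi i (t i)).
    move: (tau_pos i) (tau_le1 i) (Xi01 i (t i)) (Xi01 i (tau i)) hXt.
    move=> ? ? /andP[? ?] /andP[? ?] ? h; nra.
  have Yt0 : 0 <= Yi i (tau i) by exact: Y_ge0.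
  have /andP[pr0 pr1] : 0 <= pr (fun j => Xi j (t j)) i <= 1 by apply: pr01.
  have hc := Ft.2 i.
  have h1 := ler_wpM2l Yt0 hpr.
  have h2 := ler_wpM2r pr0 hY; rewrite mulrBl in h2.
  have h3 : e1 * pr (fun j => Xi j (t j)) i <= e1 by rewrite ler_piMr // ltW.
  lra.
exists (\matrix_(i, j) (if i == j then p i / tau i else 0)).
split.
  move=> i j; rewrite mxE; case: eqP => _ //.
  by apply: divr_ge0; apply: ltW.
have thr : threshold_policy q qc p (\matrix_(i, j) (if i == j then p i / tau i else 0)) =
    fun i => Tf q (tau i).
  apply/funext => i; apply/funext => h; rewrite /threshold_policy /Tf.
  rewrite big1 ?addr0; last first.
    by move=> j ji; rewrite mxE (negbTE ji) mul0r.
  by rewrite mxE eqxx mulrAC ler_pdivlMr // ler_pM2l.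
rewrite thr; split.
  split.
    by move=> i; split; [exact: mTf|move=> h _; exact: Tf01].
  by move=> i; rewrite SR; exact: Ftau.2.
move=> b [pb cb].
have [s [s0 [sX sS]]] := matchF b pb cb.
have Fs : F s by split => // i; exact: le_trans (cb i) (sS i).
rewrite /objectiveP; apply: ler_sum => i _.
rewrite (expectTf _ mq) ler_wpM2l //; first exact: ltW.
rewrite -sX; apply: Xmono; exact: tau_ub.
Qed.
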